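(* Let $X\subseteq \mathbb{P}^1\times\mathbb{P}^1\times\mathbb{P}^1$ be a variety of lines such that, for each $h=1,2,3$, $U_h(X)$ resembles a Ferrers diagram. Then $X$ has the $Hyp_5(\star)$-property if and only if for all $a_1,a_2\in[d_1]$, $b_1,b_2\in[d_2]$, $c_1,c_2\in[d_3]$ the following three conditions hold: (1) either $\left(\begin{array}{cc}\mu_{a_1b_1c_1} & \mu_{a_1b_2c_1}\\ \mu_{a_2b_1c_1} & \mu_{a_2b_2c_1}\end{array}\right)\neq\left(\begin{array}{cc}2&1\\2&2\end{array}\right)$ or $\left(\begin{array}{cc}\mu_{a_1b_10} & \mu_{a_1b_20}\\ \mu_{a_2b_10} & \mu_{a_2b_20}\end{array}\right)\neq\left(\begin{array}{cc}1&1\\0&1\end{array}\right)$; (2) either $\left(\begin{array}{cc}\mu_{a_1b_1c_1} & \mu_{a_1b_1c_2}\\ \mu_{a_2b_1c_1} & \mu_{a_2b_1c_2}\end{array}\right)\neq\left(\begin{array}{cc}2&1\\2&2\end{array}\right)$ or $\left(\begin{array}{cc}\mu_{a_10c_1} & \mu_{a_10c_2}\\ \mu_{a_20c_1} & \mu_{a_20c_2}\end{array}\right)\neq\left(\begin{array}{cc}1&1\\0&1\end{array}\right)$; (3) either $\left(\begin{array}{cc}\mu_{a_1b_1c_1} & \mu_{a_1b_1c_2}\\ \mu_{a_1b_2c_1} & \mu_{a_1b_2c_2}\end{array}\right)\neq\left(\begin{array}{cc}2&1\\2&2\end{array}\right)$ or $\left(\begin{array}{cc}\mu_{0b_1c_1}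 & \mu_{0b_1c_2}\\ \mu_{0b_2c_1} & \mu_{0b_2c_2}\end{array}\right)\neq\left(\begin{array}{cc}1&1\\0&1\end{array}\right)$.
   Context: $R=K[x_{1,0},x_{1,1},x_{2,0},x_{2,1},x_{3,0},x_{3,1}]$ ($K$ algebraically closed, characteristic zero) trigraded by $\deg x_{i,j}=\mathbf e_i$, coordinate ring of $\mathbb{P}^1\times\mathbb{P}^1\times\mathbb{P}^1$. A variety of lines is written $X= \bigcup_{(i,j)\in U_3(X)} \mathcal{L}(A_i,B_j)\cup\bigcup_{(i,k)\in U_2(X)} \mathcal{L}(A_i,C_k)\cup \bigcup_{(j,k)\in U_1(X)} \mathcal{L}(B_j,C_k)$, where $\mathcal L(A_1),\ldots,\mathcal L(A_{d_1})$, $\mathcal L(B_1),\ldots,\mathcal L(B_{d_2})$, $\mathcal L(C_1),\ldots,\mathcal L(C_{d_3})$ are the distinct hyperplanes containing some line of $X$, defined by linear forms of degrees $(1,0,0),(0,1,0),(0,0,1)$ respectively, $\mathcal L(F,G)$ is the line defined by $(F,G)$, $U_3(X)\subseteq[d_1]\times[d_2]$, $U_2(X)\subseteq[d_1]\times[d_3]$, $U_1(X)\subseteq[d_2]\times[d_3]$, $[n]=\{1,\dots,n\}$. $U_h(X)$ resembles a Ferrers diagram if after permuting each of its two index sets it becomes a set $U$ with: $(u,v)\in U\Rightarrow (u',v')\in U$ for all $1\le u'\le u$, $1\le v'\le v$. For $P_{ijk}=\mathcal L(A_i)\cap\mathcal L(B_j)\cap\mathcal L(C_k)$, $\mu_{ijk}$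 is the number of lines of $X$ through $P_{ijk}$. Moreover $\mu_{ij0}=1$ if $\mathcal L(A_i,B_j)\in X$ and $0$ otherwise; $\mu_{i0k}=1$ if $\mathcal L(A_i,C_k)\in X$ and $0$ otherwise; $\mu_{0jk}=1$ if $\mathcal L(B_j,C_k)\in X$ and $0$ otherwise. $X$ has the $Hyp_5(\star)$-property if for any $5$ hyperplanes $H_1,\ldots,H_5$ (each defined by a linear form of degree some $\mathbf e_i$) such that $\mathcal{L}(H_i,H_j)$ is a line of $X$ for all $j\neq i-1,i,i+1$ (indices modulo $5$), there is $u$ with $\mathcal{L}(H_u,H_{u+1})$ a line of $X$. *)

(* Defs.v *)
From HB Require Import structures.
From mathcomp Require Import all_boot all_order all_algebra.
From mathcomp Require Import perm.
Set Implicit Arguments. Unset Strict Implicit. Unset Printing Implicit Defensive.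

(* Points of P^1(K): [None] is the point at infinity, [Some t] is (1:t).
   A hyperplane of P^1xP^1xP^1 defined by a linear form of degree e_k
   (up to scalar) is the same as a pair (k, point of the k-th factor P^1). *)
Definition P1 (K : Type) := option K.

(* hyperplane (type k in 'I_3, i.e. degree e_(k+1); point of P^1) *)
Definition hyp (K : Type) := ('I_3 * P1 K)%type.

(* Data of a variety of lines X:
   a i = the point of the 1st factor defining L(A_i), similarly b, c;
   U3 subset [d1]x[d2], U2 subset [d1]x[d3], U1 subset [d2]x[d3]
   (indices are 0-based: [d] is represented by 'I_d). *)
Record varLines (K : Type) (d1 d2 d3 : nat) := VarLines {
  ptA : 'I_d1 -> P1 K;
  ptB : 'I_d2 -> P1 K;
  ptC : 'I_d3 -> P1 K;
  U3 : {set 'I_d1 * 'I_d2};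
  U2 : {set 'I_d1 * 'I_d3};
  U1 : {set 'I_d2 * 'I_d3}
}.

Section Defs.
Variables (K : eqType) (d1 d2 d3 : nat) (X : varLines K d1 d2 d3).

Definition HA (i : 'I_d1) : hyp K := (inord 0 : 'I_3, ptA X i).
Definition HB (j : 'I_d2) : hyp K := (inord 1 : 'I_3, ptB X j).
Definition HC (k : 'I_d3) : hyp K := (inord 2 : 'I_3, ptC X k).

Definition wf_varLines : Prop :=
  injective (ptA X) /\ injective (ptB X) /\ injective (ptC X) /\
  (forall i : 'I_d1, (exists j, (i, j) \in U3 X) \/ (exists k, (i, k) \in U2 X)) /\
  (forall j : 'I_d2, (exists i, (i, j) \in U3 X) \/ (exists k, (j, k) \in U1 X)) /\
  (forall k : 'I_d3, (exists i, (i, k) \in U2 X) \/ (exists j, (j, k) \in U1 X)).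

(* L(H,H') is a line of X: the line cut out by H and H' is one of the lines
   L(A_i,B_j) ((i,j) in U3), L(A_i,C_k) ((i,k) in U2), L(B_j,C_k) ((j,k) in U1).
   For hyperplanes of distinct types this happens iff {H,H'} is the
   corresponding pair of hyperplanes; for hyperplanes of the same type
   L(H,H') is empty or a hyperplane, never a line. *)
Definition is_pair (H H' P Q : hyp K) : Prop :=
  (H = P /\ H' = Q) \/ (H = Q /\ H' = P).

Definition line_of (H H' : hyp K) : Prop :=
  (exists ij, ij \in U3 X /\ is_pair H H' (HA ij.1) (HB ij.2)) \/
  (exists ik, ik \in U2 X /\ is_pair H H' (HA ik.1) (HC ik.2)) \/
  (exists jk, jk \in U1 X /\ is_pair H H' (HB jk.1) (HC jk.2)).

Definition Hyp5_star : Prop :=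
  forall H : 'I_5 -> hyp K,
    (forall i j : 'I_5, j != ord_pred i -> j != i -> j != ordS i ->
       line_of (H i) (H j)) ->
    exists u : 'I_5, line_of (H u) (H (ordS u)).

(* mu_{ijk}: the number of lines of X through P_{ijk} = (a_i, b_j, c_k). *)
Definition mu (i : 'I_d1) (j : 'I_d2) (k : 'I_d3) : nat :=
  #|[set uv in U3 X | (ptA X uv.1 == ptA X i) && (ptB X uv.2 == ptB X j)]| +
  #|[set uw in U2 X | (ptA X uw.1 == ptA X i) && (ptC X uw.2 == ptC X k)]| +
  #|[set vw in U1 X | (ptB X vw.1 == ptB X j) && (ptC X vw.2 == ptC X k)]|.

Definition muAB (i : 'I_d1) (j : 'I_d2) : nat := ((i, j) \in U3 X : nat).
Definition muAC (i : 'I_d1) (k : 'I_d3) : nat := ((i, k) \in U2 X : nat).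
Definition muBC (j : 'I_d2) (k : 'I_d3) : nat := ((j, k) \in U1 X : nat).

End Defs.

Definition ferrers_like (m n : nat) (U : {set 'I_m * 'I_n}) : Prop :=
  exists (s : {perm 'I_m}) (t : {perm 'I_n}),
    forall (u u' : 'I_m) (v v' : 'I_n),
      (u, v) \in [set (s x.1, t x.2) | x in U] ->
      (u' <= u)%N -> (v' <= v)%N ->
      (u', v') \in [set (s x.1, t x.2) | x in U].

(* Main.v *)
Require Import Defs.
From HB Require Import structures.
From mathcomp Require Import all_boot all_order all_algebra.
From mathcomp Require Import perm.
Import GRing.Theory.
Set Implicit Arguments. Unset Strict Implicit.

Definition pairb (K : eqType) (H H' P Q : hyp K) :=
  ((H == P) && (H' == Q)) || ((H == Q) && (H' == P)).

Definition lineb (K : eqType) d1 d2 d3 (X : varLines K d1 d2 d3) (H H' : hyp K) :=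
  [|| [exists ij in U3 X, pairb H H' (HA X ij.1) (HB X ij.2)],
      [exists ik in U2 X, pairb H H' (HA X ik.1) (HC X ik.2)] |
      [exists jk in U1 X, pairb H H' (HB X jk.1) (HC X jk.2)]].

Lemma pairbP (K : eqType) (H H' P Q : hyp K) : reflect (is_pair H H' P Q) (pairb H H' P Q).
Proof.
rewrite /pairb /is_pair; apply: (iffP orP).
- by case=> /andP[/eqP-> /eqP->]; [left|right].
- by case=> [[-> ->]|[-> ->]]; rewrite !eqxx; [left|right].
Qed.

Lemma linebP (K : eqType) d1 d2 d3 (X : varLines K d1 d2 d3) (H H' : hyp K) :
  reflect (line_of X H H') (lineb X H H').
Proof.
rewrite /lineb /line_of; apply: (iffP or3P).
- case=> /existsP[x /andP[h /pairbP p]].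
  + by left; exists x.
  + by right; left; exists x.
  + by right; right; exists x.
- case=> [[x [h p]]|[[x [h p]]|[x [h p]]]].
  + by apply: Or31; apply/existsP; exists x; rewrite h; apply/pairbP.
  + by apply: Or32; apply/existsP; exists x; rewrite h; apply/pairbP.
  + by apply: Or33; apply/existsP; exists x; rewrite h; apply/pairbP.
Qed.

Section S.
Variables (K : eqType) (d1 d2 d3 : nat) (X : varLines K d1 d2 d3).
Lemma eqAB i j : (HA X i == HB X j) = false.
Proof. by rewrite /HA /HB xpair_eqE -val_eqE /= !inordK. Qed.
Lemma eqAC i j : (HA X i == HC X j) = false.
Proof. by rewrite /HA /HC xpair_eqE -val_eqE /= !inordK. Qed.
Lemma eqBC i j : (HB X i == HC X j) = false.
Proof. by rewrite /HB /HC xpair_eqE -val_eqE /= !inordK. Qed.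
Lemma eqBA i j : (HB X i == HA X j) = false.
Proof. by rewrite eq_sym eqAB. Qed.
Lemma eqCA i j : (HC X i == HA X j) = false.
Proof. by rewrite eq_sym eqAC. Qed.
Lemma eqCB i j : (HC X i == HB X j) = false.
Proof. by rewrite eq_sym eqBC. Qed.
Hypotheses (iA : injective (ptA X)) (iB : injective (ptB X)) (iC : injective (ptC X)).
Lemma eqAA i j : (HA X i == HA X j) = (i == j).
Proof. by rewrite /HA xpair_eqE eqxx (inj_eq iA). Qed.
Lemma eqBB i j : (HB X i == HB X j) = (i == j).
Proof. by rewrite /HB xpair_eqE eqxx (inj_eq iB). Qed.
Lemma eqCC i j : (HC X i == HC X j) = (i == j).
Proof. by rewrite /HC xpair_eqE eqxx (inj_eq iC). Qed.

Ltac fin_l h a b := apply/existsP; exists (a, b);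
      rewrite h /pairb ?eqAA ?eqBB ?eqCC !eqxx ?orbT //; done.
Ltac ltac_f := rewrite /lineb; apply/negbTE/or3P; case=> /existsP[[x y] /andP[_]];
  rewrite /pairb ?eqAB ?eqBA ?eqAC ?eqCA ?eqBC ?eqCB ?andbF ?andFb ?orbF //=.
Ltac ltac_l := rewrite /lineb; apply/idP/idP;
  [ case/or3P => /existsP[[x y] /andP[/= hh]];
    rewrite /pairb ?eqAB ?eqBA ?eqAC ?eqCA ?eqBC ?eqCB ?eqAA ?eqBB ?eqCC ?andbF ?andFb ?orbF //=;
    try (case/andP => /eqP -> /eqP -> //)
  | try (intro; match goal with h : is_true ((?a, ?b) \in _) |- _ =>
      apply/or3P; first [ apply: Or31; fin_l h a b | apply: Or32; fin_l h a b | apply: Or33; fin_l h a b] end) ].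

Lemma lAB i j : lineb X (HA X i) (HB X j) = ((i, j) \in U3 X). Proof. ltac_l. Qed.
Lemma lBA i j : lineb X (HB X j) (HA X i) = ((i, j) \in U3 X). Proof. ltac_l. Qed.
Lemma lAC i j : lineb X (HA X i) (HC X j) = ((i, j) \in U2 X). Proof. ltac_l. Qed.
Lemma lCA i j : lineb X (HC X j) (HA X i) = ((i, j) \in U2 X). Proof. ltac_l. Qed.
Lemma lBC i j : lineb X (HB X i) (HC X j) = ((i, j) \in U1 X). Proof. ltac_l. Qed.
Lemma lCB i j : lineb X (HC X j) (HB X i) = ((i, j) \in U1 X). Proof. ltac_l. Qed.
Lemma lAA i j : lineb X (HA X i) (HA X j) = false. Proof. ltac_f. Qed.
Lemma lBB i j : lineb X (HB X i) (HB X j) = false. Proof. ltac_f. Qed.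
Lemma lCC i j : lineb X (HC X i) (HC X j) = false. Proof. ltac_f. Qed.
Lemma pairbC (H H' P Q : hyp K) : pairb H H' P Q = pairb H' H P Q.
Proof. by rewrite /pairb orbC andbC [(H == P) && _]andbC. Qed.

Lemma lineb_sym H H' : lineb X H H' = lineb X H' H.
Proof.
rewrite /lineb; congr [|| _, _ | _]; apply: eq_existsb => x; by rewrite pairbC.
Qed.

Lemma cls H H' : lineb X H H' ->
  (exists i, H = HA X i) \/ (exists j, H = HB X j) \/ (exists k, H = HC X k).
Proof.
case/or3P => /existsP[[x y] /andP[_ /pairbP [[-> _]|[-> _]]]]; eauto.
Qed.

Lemma card_sel (A B : finType) (T1 T2 : eqType) (U : {set A * B}) (f : A -> T1) (g : B -> T2)
  (fi : injective f) (gi : injective g) i j :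
  #|[set uv in U | (f uv.1 == f i) && (g uv.2 == g j)]| = ((i, j) \in U).
Proof.
rewrite (_ : [set uv in U | _] = U :&: [set (i, j)]); last first.
  by apply/setP => -[u v]; rewrite !inE (inj_eq fi) (inj_eq gi) xpair_eqE.
case: (boolP ((i, j) \in U)) => h.
  by rewrite (setIidPr _) ?cards1 // sub1set.
rewrite (_ : _ :&: _ = set0) ?cards0 //; apply/setP => x; rewrite !inE.
by case: eqP => [->|_]; rewrite ?(negbTE h) ?andbF.
Qed.

Lemma muE a b c : mu X a b c = ((a, b) \in U3 X) + ((a, c) \in U2 X) + ((b, c) \in U1 X).
Proof. by rewrite /mu !card_sel. Qed.

Definition P5 := forall g0 g1 g2 g3 g4 : hyp K,
  lineb X g0 g2 -> lineb X g2 g4 -> lineb X g4 g1 -> lineb X g1 g3 -> lineb X g3 g0 ->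
  [|| lineb X g0 g1, lineb X g1 g2, lineb X g2 g3, lineb X g3 g4 | lineb X g4 g0].

Notation o n := (@Ordinal 5 n isT).

Lemma Hyp5_P5 : Hyp5_star X -> P5.
Proof.
move=> Hy g0 g1 g2 g3 g4 p02 p24 p41 p13 p30.
pose H := fun i : 'I_5 => nth g0 [:: g0; g1; g2; g3; g4] i.
have [] := Hy H.
  case=> [[|[|[|[|[|i]]]]] Hi] //; case=> [[|[|[|[|[|j]]]]] Hj] // ; rewrite /H /=;
  move=> a b c; first [discriminate a | discriminate b | discriminate c | idtac];
  apply/linebP; rewrite // lineb_sym //.
case=> [[|[|[|[|[|u]]]]] Hu] //= /linebP q.
- by rewrite q.
- by apply/orP; right; apply/orP; left; exact q.
- by apply/orP; right; apply/orP; right; apply/orP; left; exact q.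
- by apply/orP; right; apply/orP; right; apply/orP; right; apply/orP; left; exact q.
- by apply/orP; right; apply/orP; right; apply/orP; right; apply/orP; right; exact q.
Qed.

Lemma P5_Hyp5 : P5 -> Hyp5_star X.
Proof.
move=> P H Hh.
have l : forall i j : 'I_5, j != ord_pred i -> j != i -> j != ordS i -> lineb X (H i) (H j).
  by move=> i j a b c; apply/linebP; apply: Hh.
have := P (H (o 0)) (H (o 1)) (H (o 2)) (H (o 3)) (H (o 4)).
move/(_ (l (o 0) (o 2) isT isT isT) (l (o 2) (o 4) isT isT isT) (l (o 4) (o 1) isT isT isT) (l (o 1) (o 3) isT isT isT) (l (o 3) (o 0) isT isT isT)).
case/orP => [q|/orP[q|/orP[q|/orP[q|q]]]].
- by exists (o 0); apply/linebP; rewrite (_ : ordS _ = o 1) //; apply: val_inj.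
- by exists (o 1); apply/linebP; rewrite (_ : ordS _ = o 2) //; apply: val_inj.
- by exists (o 2); apply/linebP; rewrite (_ : ordS _ = o 3) //; apply: val_inj.
- by exists (o 3); apply/linebP; rewrite (_ : ordS _ = o 4) //; apply: val_inj.
- by exists (o 4); apply/linebP; rewrite (_ : ordS _ = o 0) //; apply: val_inj.
Qed.
Definition Conds := forall (a1 a2 : 'I_d1) (b1 b2 : 'I_d2) (c1 c2 : 'I_d3),
     [/\ (mu X a1 b1 c1, mu X a1 b2 c1, mu X a2 b1 c1, mu X a2 b2 c1) <> (2, 1, 2, 2)
         \/ (muAB X a1 b1, muAB X a1 b2, muAB X a2 b1, muAB X a2 b2) <> (1, 1, 0, 1),
         (mu X a1 b1 c1, mu X a1 b1 c2, mu X a2 b1 c1, mu X a2 b1 c2) <> (2, 1, 2, 2)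
         \/ (muAC X a1 c1, muAC X a1 c2, muAC X a2 c1, muAC X a2 c2) <> (1, 1, 0, 1)
       & (mu X a1 b1 c1, mu X a1 b1 c2, mu X a1 b2 c1, mu X a1 b2 c2) <> (2, 1, 2, 2)
         \/ (muBC X b1 c1, muBC X b1 c2, muBC X b2 c1, muBC X b2 c2) <> (1, 1, 0, 1)]%N.

Ltac rw_memb := repeat match goal with
  | h : (?x \in ?S) = ?b |- context[?x \in ?S] => rewrite h
  | h : is_true (?x \in ?S) |- context[?x \in ?S] => rewrite h
  end.

Ltac rw_l := rewrite ?lAB ?lBA ?lAC ?lCA ?lBC ?lCB ?lAA ?lBB ?lCC.

Ltac dec_or := match goal with |- ?t <> ?s \/ ?u <> ?v =>
   let E := fresh "E" in let F := fresh "F" in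
   case: (eqVneq t s) => [E|E]; last (by left; apply/eqP);
   case: (eqVneq u v) => [F|F]; last (by right; apply/eqP);
   exfalso; revert E F; rewrite !muE; unfold muAB, muAC, muBC;
   repeat (match goal with |- context[?x \in ?S] => let h := fresh "h" in destruct (x \in S) eqn:h end);
   intros E F; try discriminate E; try discriminate F
 end.

Lemma P5_cond : P5 -> Conds.
Proof.
move=> P a1 a2 b1 b2 c1 c2; split.
- dec_or.
  have := P (HC X c1) (HB X b2) (HB X b1) (HA X a2) (HA X a1); rw_l; rw_memb.
  by move/(_ isT isT isT isT isT).
- dec_or.
  have := P (HB X b1) (HC X c2) (HC X c1) (HA X a2) (HA X a1); rw_l; rw_memb.
  by move/(_ isT isT isT isT isT).
- dec_or.
  have := P (HA X a1) (HC X c2) (HC X c1) (HB X b2) (HB X b1); rw_l; rw_memb.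
  by move/(_ isT isT isT isT isT).
Qed.
Ltac kill_false := match goal with h : is_true false |- _ => discriminate h end.

Ltac try_c1 Hc := match goal with
  a1 : 'I_d1, a2 : 'I_d1, b1 : 'I_d2, b2 : 'I_d2, c1 : 'I_d3 |- _ =>
   let A := fresh "A" in case: (Hc a1 a2 b1 b2 c1 c1) => [[A|A] _ _]; apply: A; rewrite ?muE; unfold muAB, muAC, muBC;
   rw_memb; reflexivity end.
Ltac try_c2 Hc := match goal with
  a1 : 'I_d1, a2 : 'I_d1, b1 : 'I_d2, c1 : 'I_d3, c2 : 'I_d3 |- _ =>
   let A := fresh "A" in case: (Hc a1 a2 b1 b1 c1 c2) => [_ [A|A] _]; apply: A; rewrite ?muE; unfold muAB, muAC, muBC;
   rw_memb; reflexivity end.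
Ltac try_c3 Hc := match goal with
  a1 : 'I_d1, b1 : 'I_d2, b2 : 'I_d2, c1 : 'I_d3, c2 : 'I_d3 |- _ =>
   let A := fresh "A" in case: (Hc a1 a1 b1 b2 c1 c2) => [_ _ [A|A]]; apply: A; rewrite ?muE; unfold muAB, muAC, muBC;
   rw_memb; reflexivity end.

Lemma cond_P5 : Conds -> P5.
Proof.
move=> Hc g0 g1 g2 g3 g4 p02 p24 p41 p13 p30.
case: (cls p02) => [[x0 ?]|[[x0 ?]|[x0 ?]]];
case: (cls p13) => [[x1 ?]|[[x1 ?]|[x1 ?]]];
case: (cls p24) => [[x2 ?]|[[x2 ?]|[x2 ?]]];
case: (cls p30) => [[x3 ?]|[[x3 ?]|[x3 ?]]];
case: (cls p41) => [[x4 ?]|[[x4 ?]|[x4 ?]]]; subst;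
move: p02 p24 p41 p13 p30; rw_l; move=> p02 p24 p41 p13 p30; try kill_false;
apply/contraT; rewrite !negb_or => /and5P[/negbTE n01 /negbTE n12 /negbTE n23 /negbTE n34 /negbTE n40];
exfalso; first [try_c1 Hc | try_c2 Hc | try_c3 Hc].
Qed.
End S.

Unset Implicit Arguments.

Theorem proposition3p7 (K : closedFieldType) (d1 d2 d3 : nat)
  (X : varLines K d1 d2 d3) :
  [pchar K]%R =i pred0 ->
  wf_varLines X ->
  ferrers_like (U3 X) -> ferrers_like (U2 X) -> ferrers_like (U1 X) ->
  Hyp5_star X <->
  (forall (a1 a2 : 'I_d1) (b1 b2 : 'I_d2) (c1 c2 : 'I_d3),
     [/\ (mu X a1 b1 c1, mu X a1 b2 c1, mu X a2 b1 c1, mu X a2 b2 c1) <> (2, 1, 2, 2)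
         \/ (muAB X a1 b1, muAB X a1 b2, muAB X a2 b1, muAB X a2 b2) <> (1, 1, 0, 1),
         (mu X a1 b1 c1, mu X a1 b1 c2, mu X a2 b1 c1, mu X a2 b1 c2) <> (2, 1, 2, 2)
         \/ (muAC X a1 c1, muAC X a1 c2, muAC X a2 c1, muAC X a2 c2) <> (1, 1, 0, 1)
       & (mu X a1 b1 c1, mu X a1 b1 c2, mu X a1 b2 c1, mu X a1 b2 c2) <> (2, 1, 2, 2)
         \/ (muBC X b1 c1, muBC X b1 c2, muBC X b2 c1, muBC X b2 c2) <> (1, 1, 0, 1)]%N).
Proof.
move=> _ [iA [iB [iC _]]] _ _ _; split.
- by move=> H; apply: (P5_cond iA iB iC); apply: Hyp5_P5.
- by move=> H; apply: P5_Hyp5; apply: (cond_P5 iA iB iC).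
Qed.
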